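(* The function $f$ is well defined on $(0,\infty)$, differentiable, and satisfies for all $\theta>0$ \[1=4\lambda(\theta)+\exp\big(-f'(\theta)\big).\]
   Context: Define $\lambda:[0,\infty)\to(0,1/4]$ by $\lambda(0)=1/4$ and, for $\theta>0$, $\lambda(\theta)$ is the unique $\lambda\in(0,1/4)$ with $-1+\frac{\operatorname{artanh}(\sqrt{1-4\lambda})}{\sqrt{1-4\lambda}}=\theta$ (this map is a strictly decreasing bijection from $(0,1/4)$ onto $(0,\infty)$). For $\theta>0$ set $f(\theta)=-\ln\lambda(\theta)-2\theta-\theta\ln\big(1-4\lambda(\theta)\big)$. *)

(* Defs.v *)
From Stdlib Require Import Reals ClassicalEpsilon.
From Coquelicot Require Import Coquelicot.
Open Scope R_scope.

Definition artanh (x : R) : R := / 2 * ln ((1 + x) / (1 - x)).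

Definition theta_of (l : R) : R :=
  -1 + artanh (sqrt (1 - 4 * l)) / sqrt (1 - 4 * l).

(* lambda(0) = 1/4; for theta > 0, the (unique) l in (0,1/4) with theta_of l = theta,
   chosen by Hilbert's epsilon (existence/uniqueness is part of the theorem). *)
Definition lam (t : R) : R :=
  match Req_EM_T t 0 with
  | left _ => / 4
  | right _ => epsilon (inhabits 0) (fun l => 0 < l < / 4 /\ theta_of l = t)
  end.

Definition f_theta (t : R) : R :=
  - ln (lam t) - 2 * t - t * ln (1 - 4 * lam t).

(* Main.v *)
Require Import Defs.
From Stdlib Require Import Reals Lra Ranalysis5 ClassicalEpsilon.
From Coquelicot Require Import Coquelicot.
Open Scope R_scope.

Lemma incr_strict (f df : R -> R) a b : a < b ->
  (forall x, a <= x <= b -> is_derive f x (df x) /\ 0 < df x) -> f a < f b.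
Proof.
  intros Hab H.
  destruct (MVT_gen f a b df) as [c [Hc Hd]].
  - intros x Hx. apply H. rewrite Rmin_left, Rmax_right in Hx by lra. lra.
  - intros x Hx. rewrite Rmin_left, Rmax_right in Hx by lra.
    apply continuity_pt_filterlim. apply (ex_derive_continuous (K:=R_AbsRing) (V:=R_NormedModule)). exists (df x). apply H; lra.
  - rewrite Rmin_left, Rmax_right in Hc by lra.
    destruct (H c Hc) as [_ Hp]. assert (0 < df c * (b - a)) by (apply Rmult_lt_0_compat; lra). lra.
Qed.

Lemma incr_weak (f df : R -> R) a b : a <= b ->
  (forall x, a <= x <= b -> is_derive f x (df x) /\ 0 <= df x) -> f a <= f b.
Proof.
  intros Hab H. destruct (Req_dec a b) as [->|Hne]; [lra|].
  destruct (MVT_gen f a b df) as [c [Hc Hd]].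
  - intros x Hx. apply H. rewrite Rmin_left, Rmax_right in Hx by lra. lra.
  - intros x Hx. rewrite Rmin_left, Rmax_right in Hx by lra.
    apply continuity_pt_filterlim. apply (ex_derive_continuous (K:=R_AbsRing) (V:=R_NormedModule)). exists (df x). apply H; lra.
  - rewrite Rmin_left, Rmax_right in Hc by lra.
    destruct (H c Hc) as [_ Hp]. assert (0 <= df c * (b - a)) by (apply Rmult_le_pos; lra). lra.
Qed.

Lemma artanh_derive x : -1 < x < 1 -> is_derive artanh x (/ (1 - x^2)).
Proof.
  intros Hx. unfold artanh. auto_derive.
  - split; [lra|split; [|auto]]. apply Rmult_lt_0_compat; [lra|apply Rinv_0_lt_compat; lra].
  - field. split; [|split]; try lra. nra.
Qed.


Definition hf (s : R) := s / (1 - s^2) - artanh s.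

Lemma hf_derive s : -1 < s < 1 -> is_derive hf s (2 * s^2 / (1 - s^2)^2).
Proof.
  intros Hs. unfold hf.
  assert (Hd := artanh_derive s Hs).
  auto_derive.
  - split; [nra|split; [exists (/ (1 - s^2)); exact Hd|auto]].
  - replace (Derive (fun x => artanh x) s) with (/(1-s^2)) by (symmetry; apply is_derive_unique; exact Hd).
    field. nra.
Qed.

Lemma artanh0 : artanh 0 = 0.
Proof. unfold artanh. replace ((1+0)/(1-0)) with 1 by field. rewrite ln_1. ring. Qed.

Lemma artanh_lt s : 0 < s < 1 -> artanh s < s / (1 - s^2).
Proof.
  intros Hs.
  assert (H1 : hf 0 <= hf (s/2)).
  { apply (incr_weak hf (fun s => 2 * s^2 / (1 - s^2)^2)); [lra|].
    intros x Hx. split; [apply hf_derive; lra|].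
    apply Rmult_le_pos; [nra|]. apply Rlt_le, Rinv_0_lt_compat. nra. }
  assert (H2 : hf (s/2) < hf s).
  { apply (incr_strict hf (fun s => 2 * s^2 / (1 - s^2)^2)); [lra|].
    intros x Hx. split; [apply hf_derive; lra|].
    apply Rmult_lt_0_compat; [nra|]. apply Rinv_0_lt_compat. apply pow_lt; nra. }
  unfold hf in *. rewrite artanh0 in H1. replace (0/(1-0^2)) with 0 in H1 by field. lra.
Qed.

Definition G (s : R) := -1 + artanh s / s.

Lemma G_derive s : 0 < s < 1 -> is_derive G s (hf s / s^2).
Proof.
  intros Hs. unfold G.
  assert (Hd := artanh_derive s ltac:(lra)).
  auto_derive.
  - repeat split; try lra. exists (/ (1 - s^2)); exact Hd.
  - replace (Derive (fun x => artanh x) s) with (/(1-s^2)) by (symmetry; apply is_derive_unique; exact Hd).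
    unfold hf. field. split; nra.
Qed.

Lemma G_dpos s : 0 < s < 1 -> 0 < hf s / s^2.
Proof.
  intros Hs. apply Rdiv_lt_0_compat; [|nra]. unfold hf. generalize (artanh_lt s Hs); lra.
Qed.

Lemma G_incr a b : 0 < a -> a < b -> b < 1 -> G a < G b.
Proof.
  intros. apply (incr_strict G (fun s => hf s / s^2)); [lra|].
  intros x Hx. split; [apply G_derive|apply G_dpos]; lra.
Qed.

Lemma G_inj a b : 0 < a < 1 -> 0 < b < 1 -> G a = G b -> a = b.
Proof.
  intros Ha Hb E. destruct (Rtotal_order a b) as [H|[H|H]]; auto.
  - apply G_incr in H; lra.
  - apply G_incr in H; lra.
Qed.

Lemma theta_G s : 0 < s -> theta_of ((1 - s^2)/4) = G s.
Proof.
  intros Hs. unfold theta_of, G.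
  replace (1 - 4 * ((1 - s^2)/4)) with (s^2) by field.
  rewrite sqrt_pow2 by lra. reflexivity.
Qed.

Lemma G_cont s : 0 < s < 1 -> continuity_pt G s.
Proof.
  intros Hs. apply continuity_pt_filterlim.
  apply (ex_derive_continuous (K:=R_AbsRing) (V:=R_NormedModule)).
  exists (hf s / s^2). apply G_derive; lra.
Qed.

Lemma G_exists t : 0 < t -> exists s, 0 < s < 1 /\ G s = t.
Proof.
  intros Ht.
  set (a := sqrt (t / (2 + 2 * t))).
  assert (Ha2 : a^2 = t / (2 + 2*t)).
  { unfold a. apply pow2_sqrt. apply Rlt_le, Rdiv_lt_0_compat; lra. }
  assert (Ha0 : 0 < a).
  { unfold a. apply sqrt_lt_R0, Rdiv_lt_0_compat; lra. }
  assert (Hlt1 : t / (2 + 2*t) < 1).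
  { apply Rmult_lt_reg_r with (2 + 2*t); [lra|]. unfold Rdiv. rewrite Rmult_assoc, Rinv_l by lra. lra. }
  assert (Ha1 : a < 1) by nra.
  assert (HGa : G a < t).
  { unfold G. assert (H := artanh_lt a ltac:(lra)).
    assert (artanh a / a < / (1 - a^2)).
    { apply Rmult_lt_reg_r with a; [lra|]. unfold Rdiv. rewrite Rmult_assoc, Rinv_l by lra.
      replace (/ (1 - a^2) * a) with (a / (1 - a^2)) by (field; nra). lra. }
    assert (/ (1 - a^2) = (2 + 2*t) / (2 + t)).
    { rewrite Ha2. field. split; lra. }
    assert ((2 + 2*t) / (2+t) < 1 + t).
    { apply Rmult_lt_reg_r with (2 + t); [lra|]. unfold Rdiv. rewrite Rmult_assoc, Rinv_l by lra. nra. }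
    lra. }
  set (e := exp (- (2 * (t + 2)))).
  assert (He0 : 0 < e) by apply exp_pos.
  assert (He1 : e < 1).
  { unfold e. rewrite <- exp_0. apply exp_increasing. lra. }
  set (b := 1 - e).
  assert (Hb : 0 < b < 1) by (unfold b; lra).
  assert (Hart : t + 2 < artanh b).
  { unfold artanh.
    assert (ln (/ e) < ln ((1 + b) / (1 - b))).
    { apply ln_increasing. apply Rinv_0_lt_compat; lra.
      replace (1 - b) with e by (unfold b; ring). unfold Rdiv.
      rewrite <- (Rmult_1_l (/ e)) at 1. apply Rmult_lt_compat_r; [apply Rinv_0_lt_compat|]; lra. }
    rewrite ln_Rinv in H by lra. unfold e in H. rewrite ln_exp in H. lra. }
  assert (HGb : t < G b).
  { unfold G. assert (artanh b <= artanh b / b).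
    { apply Rmult_le_reg_r with b; [lra|]. unfold Rdiv. rewrite Rmult_assoc, Rinv_l by lra. nra. }
    lra. }
  assert (Hab : a < b).
  { destruct (Rlt_or_le a b) as [H|H]; auto.
    destruct (Req_dec a b) as [E|E]. { rewrite E in HGa. lra. }
    assert (G b < G a) by (apply G_incr; lra). lra. }
  destruct (IVT_interv (fun s => G s - t) a b) as [z [Hz Ez]].
  - intros x Hx. apply continuity_pt_minus; [apply G_cont; lra|apply continuity_pt_const; intros ? ?; auto].
  - exact Hab.
  - lra.
  - lra.
  - exists z. split; [lra|]. lra.
Qed.

Lemma exu t : 0 < t -> exists! l : R, 0 < l < / 4 /\ theta_of l = t.
Proof.
  intros Ht. destruct (G_exists t Ht) as [s [Hs Gs]].
  exists ((1 - s^2)/4). split.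
  - split; [split; nra|]. rewrite theta_G by lra. exact Gs.
  - intros l [Hl Tl].
    set (s' := sqrt (1 - 4 * l)).
    assert (Hs2 : s'^2 = 1 - 4 * l) by (apply pow2_sqrt; lra).
    assert (Hs0 : 0 < s') by (apply sqrt_lt_R0; lra).
    assert (s' < 1) by nra.
    assert (G s' = t) by exact Tl.
    assert (s = s') by (apply G_inj; lra).
    subst s'. rewrite H1 in *. lra.
Qed.

Lemma lam_spec t : 0 < t -> 0 < lam t < / 4 /\ theta_of (lam t) = t.
Proof.
  intros Ht. unfold lam. destruct (Req_EM_T t 0) as [E|E]; [lra|].
  apply epsilon_spec. destruct (exu t Ht) as [l [Hl _]]. exists l; exact Hl.
Qed.

Definition S (t : R) := sqrt (1 - 4 * lam t).

Lemma S_spec t : 0 < t -> 0 < S t < 1 /\ G (S t) = t /\ S t ^ 2 = 1 - 4 * lam t.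
Proof.
  intros Ht. destruct (lam_spec t Ht) as [Hl Tl].
  assert (Hs2 : S t ^2 = 1 - 4 * lam t) by (apply pow2_sqrt; lra).
  assert (Hs0 : 0 < S t) by (apply sqrt_lt_R0; lra).
  split; [split; nra|]. split; [exact Tl|exact Hs2].
Qed.

Lemma S_incr x y : 0 < x -> x < y -> S x < S y.
Proof.
  intros Hx Hxy. destruct (S_spec x Hx) as [Ax [Bx _]]. destruct (S_spec y ltac:(lra)) as [Ay [By _]].
  destruct (Rlt_or_le (S x) (S y)) as [H|H]; auto.
  destruct (Req_dec (S x) (S y)) as [E|E]. { rewrite E in Bx. lra. }
  assert (G (S y) < G (S x)) by (apply G_incr; lra). lra.
Qed.

Lemma S_le x y : 0 < x -> x <= y -> S x <= S y.
Proof.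
  intros Hx Hxy. destruct (Req_dec x y) as [->|E]; [lra|]. apply Rlt_le, S_incr; lra.
Qed.

Lemma S_cont t : 0 < t -> continuity_pt S t.
Proof.
  intros Ht.
  destruct (S_spec (t/2) ltac:(lra)) as [A1 [B1 _]].
  destruct (S_spec (2*t) ltac:(lra)) as [A2 [B2 _]].
  apply (continuity_pt_recip_interv G S (S (t/2)) (S (2*t))).
  - apply S_incr; lra.
  - intros x y Hx Hxy Hy. apply G_incr; lra.
  - intros x Hx1 Hx2. rewrite B1 in Hx1. rewrite B2 in Hx2. unfold comp, id.
    apply (S_spec x); lra.
  - intros x Hx1 Hx2. rewrite B1 in Hx1. rewrite B2 in Hx2. split; apply S_le; lra.
  - intros a Ha. apply G_cont; lra.
  - rewrite B1, B2. lra.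
Qed.

Lemma S_derive t : 0 < t -> is_derive S t (1 / (hf (S t) / (S t)^2)).
Proof.
  intros Ht.
  destruct (S_spec (t/2) ltac:(lra)) as [A1 [B1 _]].
  destruct (S_spec (2*t) ltac:(lra)) as [A2 [B2 _]].
  destruct (S_spec t Ht) as [A0 [B0 _]].
  assert (Prf : forall a, S (t/2) <= a <= S (2*t) -> derivable_pt G a).
  { intros a Ha. exists (hf a / a^2). apply is_derive_Reals. apply G_derive. lra. }
  assert (Hi : S (t/2) <= S t <= S (2*t)) by (split; apply S_le; lra).
  apply is_derive_Reals.
  assert (HD : derive_pt G (S t) (Prf (S t) Hi) = hf (S t) / (S t)^2).
  { apply derive_pt_eq_0. apply is_derive_Reals. apply G_derive. lra. }
  rewrite <- HD.
  apply (derivable_pt_lim_recip_interv G S (t/2) (2*t) t Prf (S_cont t Ht)); try lra.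
  - intros x Hx. unfold comp, id. apply (S_spec x); lra.
  - rewrite HD. generalize (G_dpos (S t) A0). lra.
Qed.

Definition F (u : R) := - ln ((1 - S u ^ 2) / 4) - 2 * u - u * ln (S u ^ 2).

Lemma F_loc t : 0 < t -> locally t (fun u => F u = f_theta u).
Proof.
  intros Ht. exists (mkposreal t Ht). intros y Hy.
  assert (0 < y).
  { unfold ball in Hy; simpl in Hy; unfold AbsRing_ball, abs, minus, plus, opp in Hy; simpl in Hy.
    apply Rabs_lt_between in Hy. lra. }
  destruct (S_spec y H) as [_ [_ E]]. unfold F, f_theta. rewrite E.
  replace ((1 - (1 - 4 * lam y)) / 4) with (lam y) by field. reflexivity.
Qed.

Lemma F_derive t : 0 < t -> is_derive F t (- ln (S t ^ 2)).
Proof.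
  intros Ht. destruct (S_spec t Ht) as [A0 [B0 _]].
  assert (Hd := S_derive t Ht).
  assert (Hp := G_dpos (S t) A0).
  unfold F. auto_derive.
  - repeat split; try (exists (1 / (hf (S t) / (S t)^2)); exact Hd); try nra.
  - replace (Derive (fun x => S x) t) with (1 / (hf (S t) / (S t)^2)) by (symmetry; apply is_derive_unique; exact Hd).
    set (s := S t) in *. clearbody s. subst t.
    replace (s * (s * 1)) with (s ^ 2) by ring.
    set (L := ln (s ^ 2)).
    assert (HA := artanh_lt s A0).
    assert (HE : s - artanh s * (1 - s^2) = (s / (1 - s^2) - artanh s) * (1 - s^2)) by (field; nra).
    assert (0 < (s / (1 - s^2) - artanh s) * (1 - s^2)) by (apply Rmult_lt_0_compat; nra).
    unfold G, hf in *. field. repeat split; try nra.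
Qed.

Theorem proposition2 :
  (forall t : R, 0 < t -> exists! l : R, 0 < l < / 4 /\ theta_of l = t) /\
  (forall t : R, 0 < t -> ex_derive f_theta t) /\
  (forall t : R, 0 < t -> 1 = 4 * lam t + exp (- Derive f_theta t)).
Proof.
  assert (Hf : forall t, 0 < t -> is_derive f_theta t (- ln (S t ^ 2))).
  { intros t Ht. apply (is_derive_ext_loc F). apply F_loc; exact Ht. apply F_derive; exact Ht. }
  split; [exact exu|split].
  - intros t Ht. exists (- ln (S t ^ 2)). apply Hf; exact Ht.
  - intros t Ht. rewrite (is_derive_unique _ _ _ (Hf t Ht)).
    destruct (S_spec t Ht) as [A0 [_ E]].
    rewrite Ropp_involutive, exp_ln by (apply pow_lt; lra). lra.
Qed.
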